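(* Let $k\ge1$ be an integer, $p_{\max}\in(0,1)$ and $\lambda_k>0$. Let items $X_i\sim\operatorname{Ber}(p_i,s_i)$ with $s_i\in\left(\frac{1}{k+1},\frac1k\right]$, $p_i\in(0,p_{\max}]$ and $\frac{1}{\lambda_k}\ln\frac{1}{1-p_i}\le1$ be packed, in order, by an Any-Fit algorithm applied to the real values $\frac{1}{\lambda_k}\ln\frac{1}{1-p_i}$ (bins of capacity 1), producing bins $\mathcal{B}_1,\dots,\mathcal{B}_m$ with $m\ge2$. Then $\frac1m\sum_{j=1}^m\sum_{i\in\mathcal{B}_j}p_is_i>\frac{\lambda_k(1-p_{\max})}{2(k+1)}$.
   Context: $X\sim\operatorname{Ber}(p,s)$ means $X=s$ with probability $p$ and $0$ otherwise. An Any-Fit algorithm processes real values in $[0,1]$ one by one, keeps every bin's total at most $1$, and opens a new bin only if the current value fits into no already opened bin. *)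

(* Defs.v *)
From mathcomp Require Import all_boot all_order all_algebra.
From mathcomp Require Import all_classical all_reals all_analysis.
Set Implicit Arguments. Unset Strict Implicit. Unset Printing Implicit Defensive.
Import Order.TTheory GRing.Theory Num.Theory.
Local Open Scope ring_scope.

Section AnyFit.
Variable R : realType.

(* Items are indexed 0,1,2,...; item i has size v i and is put in bin a i
   (bins numbered 0,1,2,... in the order they are opened). *)

Definition load (v : nat -> R) (a : nat -> nat) (j i : nat) : R :=
  \sum_(l < i | a l == j) v l.

(* number of bins opened before item i is processed *)
Fixpoint nbins (a : nat -> nat) (i : nat) : nat :=
  match i with
  | 0 => 0
  | i'.+1 => if a i' == nbins a i' then (nbins a i').+1 else nbins a i'
  end.

(* a is a run of some Any-Fit algorithm on items 0..n-1 with sizes v: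
   each item goes either into an already opened bin (index < nbins)
   or into a newly opened bin (index = nbins); the bin's total stays <= 1;
   and a new bin is opened only if the item fits into no opened bin. *)
Definition any_fit (v : nat -> R) (n : nat) (a : nat -> nat) : Prop :=
  forall i, (i < n)%N ->
    [/\ (a i <= nbins a i)%N,
        load v a (a i) i + v i <= 1 &
        (a i = nbins a i ->
           forall j, (j < nbins a i)%N -> 1 < load v a j i + v i)].

End AnyFit.

(* Main.v *)
Set Warnings "-all".
Require Import Defs.
From mathcomp Require Import all_boot all_order all_algebra.
From mathcomp Require Import all_classical all_reals all_analysis.
From mathcomp Require Import ring lra.
Import Order.TTheory GRing.Theory Num.Theory.
Local Open Scope ring_scope.

Lemma load_S (R : realType) (v : nat -> R) a j n :
  load v a j n.+1 = load v a j n + (if a n == j then v n else 0).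
Proof. by rewrite /load !(big_mkcond (fun l : 'I__ => a l == j)) big_ord_recr. Qed.

Lemma load_mono (R : realType) (v : nat -> R) a j i n :
  (forall l, (l < n)%N -> 0 <= v l) -> (i <= n)%N -> load v a j i <= load v a j n.
Proof.
elim: n => [|n IH] v0; first by rewrite leqn0 => /eqP ->.
rewrite leq_eqVlt => /orP [/eqP -> //|]; rewrite ltnS => hi.
rewrite load_S; apply: le_trans (IH (fun l hl => v0 l (ltnW hl)) hi) _.
rewrite lerDl; case: eqP => // _; exact: v0.
Qed.

Lemma nbins_open a n j : (j < nbins a n)%N ->
  exists i, [/\ (i < n)%N, a i = j & nbins a i = j].
Proof.
elim: n => [//|n IH] /=.
case: eqP => [han|_ /IH [i [hi h1 h2]]]; last by exists i; split=> //; apply: ltnW.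
rewrite ltnS leq_eqVlt => /orP [/eqP ->|/IH [i [hi h1 h2]]].
  by exists n; split.
by exists i; split=> //; apply: ltnW.
Qed.

Lemma pair_gt1 (R : realType) (v : nat -> R) n a :
  any_fit v n a -> (forall l, (l < n)%N -> 0 <= v l) ->
  forall j j', (j < j')%N -> (j' < nbins a n)%N ->
  1 < load v a j n + load v a j' n.
Proof.
move=> af v0 j j' hjj' hj'.
have [i [hi hai hni]] := @nbins_open a n j' hj'.
have [_ _ h3] := af i hi.
have := h3 (etrans hai (esym hni)) j; rewrite hni => /(_ hjj') H.
apply: lt_le_trans H _; apply: lerD.
  by apply: load_mono => //; apply: ltnW.
apply: le_trans (@load_mono R v a j' i.+1 n v0 hi).
rewrite load_S hai eqxx lerDr; rewrite /load; apply: sumr_ge0 => l _; apply: v0; apply: ltn_trans hi; exact: ltn_ord.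
Qed.

Lemma sum_gt (R : realType) (L : nat -> R) m : (2 <= m)%N ->
  (forall j j', (j < j')%N -> (j' < m)%N -> 1 < L j + L j') ->
  m%:R < 2 * \sum_(j < m) L j.
Proof.
case: m => [//|m] hm H.
rewrite mulr2n mulrDl mul1r.
rewrite {1}big_ord_recl big_ord_recr /=.
have -> : L 0%N + \sum_(i < m) L (bump 0 i) + (\sum_(i < m) L i + L m) =
   \sum_(i < m) (L i + L i.+1) + (L 0%N + L m).
  rewrite big_split /=.
  have -> : \sum_(i < m) L (bump 0 i) = \sum_(i < m) L i.+1 by apply: eq_bigr.
  set A := \sum_(i < m) L i; set B := \sum_(i < m) L i.+1.
  ring.
rewrite -addn1 natrD; apply: ler_ltD.
  have -> : (m%:R : R) = \sum_(i < m) (1 : R) by rewrite sumr_const card_ord.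
  apply: ler_sum => i _.
  apply/ltW/H => //; exact: ltn_ord.
by apply: H.
Qed.

Theorem lemma9 (R : realType) (k : nat) (pmax lam : R) (n : nat)
    (p s : nat -> R) (a : nat -> nat) :
  (1 <= k)%N ->
  0 < pmax < 1 ->
  0 < lam ->
  (forall i, (i < n)%N -> (k.+1%:R)^-1 < s i <= (k%:R)^-1) ->
  (forall i, (i < n)%N -> 0 < p i <= pmax) ->
  (forall i, (i < n)%N -> lam^-1 * ln ((1 - p i)^-1) <= 1) ->
  any_fit (fun i => lam^-1 * ln ((1 - p i)^-1)) n a ->
  (2 <= nbins a n)%N ->
  (nbins a n)%:R^-1 * (\sum_(j < nbins a n) \sum_(i < n | a i == j) p i * s i)
    > lam * (1 - pmax) / (2 * k.+1%:R).
Proof.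
move=> hk /andP [pm0 pm1] hlam hs hp _ af hm.
set v := fun i => lam^-1 * ln ((1 - p i)^-1).
set m := nbins a n.
have k1 : (0 : R) < k.+1%:R by rewrite ltr0n.
set c := lam * (1 - pmax) / k.+1%:R.
have c0 : 0 < c by rewrite /c; apply: divr_gt0 => //; apply: mulr_gt0 => //; lra.
have lnb : forall i, (i < n)%N -> 0 <= ln ((1 - p i)^-1) /\
     (1 - pmax) * ln ((1 - p i)^-1) <= p i.
  move=> i hi; have /andP [p0 pp] := hp i hi.
  have q0 : 0 < 1 - p i by lra.
  have e : (1 - p i)^-1 = 1 + p i / (1 - p i) by field; lra.
  have l0 : 0 <= ln ((1 - p i)^-1).
    by apply: ln_ge0; rewrite e lerDl; apply: divr_ge0; lra.
  split => //.
  apply: le_trans (_ : (1 - p i) * ln ((1 - p i)^-1) <= p i).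
    by apply: ler_wpM2r => //; lra.
  apply: le_trans (_ : (1 - p i) * (p i / (1 - p i)) <= p i).
    apply: ler_wpM2l; first lra.
    by rewrite {1}e; apply: le_ln1Dx; apply: (lt_le_trans (_ : -1 < 0)); [lra|apply: divr_ge0; lra].
  by rewrite mulrC divfK //; lra.
have v0 : forall l, (l < n)%N -> 0 <= v l.
  by move=> l hl; rewrite /v; apply: mulr_ge0; [rewrite invr_ge0; lra| case: (lnb l hl)].
have key : forall i, (i < n)%N -> c * v i <= p i * s i.
  move=> i hi; have [l0 l1] := lnb i hi; have /andP [s1 _] := hs i hi.
  have /andP [p0 _] := hp i hi.
  have -> : c * v i = (1 - pmax) * ln ((1 - p i)^-1) * k.+1%:R^-1.
    rewrite /c /v; field; apply/andP; split; rewrite gt_eqF //.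
  apply: le_trans (ler_wpM2r _ l1) _; first by rewrite invr_ge0 ltW.
  by apply: ler_wpM2l; [lra| apply: ltW].
have S : c * \sum_(j < m) load v a j n <=
    \sum_(j < m) \sum_(i < n | a i == j) p i * s i.
  rewrite mulr_sumr; apply: ler_sum => j _; rewrite /load mulr_sumr.
  by apply: ler_sum => i _; apply: key; exact: ltn_ord.
have T := @sum_gt R (fun j => load v a j n) m hm
   (fun j j' h1 h2 => @pair_gt1 R v n a af v0 j j' h1 h2).
set X := \sum_(j < m) load v a j n in S T.
have m0 : (0 : R) < m%:R by rewrite ltr0n; apply: leq_trans hm.
have -> : lam * (1 - pmax) / (2 * k.+1%:R) = c / 2.
  by rewrite /c; field; rewrite gt_eqF.
apply: lt_le_trans (_ : c / 2 < m%:R^-1 * (c * X)) (ler_wpM2l _ S); last first.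
  by rewrite invr_ge0 ltW.
rewrite mulrCA ltr_pM2l // mulrC ltr_pdivlMr //.
lra.
Qed.
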